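(* Let $B_1,B_2\in\mathbb{B}_n$ be rational boxes in $\mathbb{R}^n$. Then $B_1\uplus B_2\neq B_1\cup B_2$ if and only if (1) there exists $i\in\{1,\dots,n\}$ such that $\pi_i(B_1)\oplus\pi_i(B_2)\neq\pi_i(B_1)\cup\pi_i(B_2)$; or (2) there exist $i,j\in\{1,\dots,n\}$ with $i\neq j$ such that $\pi_i(B_1)\not\subseteq\pi_i(B_2)$ and $\pi_j(B_2)\not\subseteq\pi_j(B_1)$.
   Context: A rational interval constraint on dimension $i$ is a constraint $x_i\bowtie b$ with $\bowtie\in\{<,\le,=,\ge,>\}$ and $b\in\mathbb{Q}$. A rational box is the set of points of $\mathbb{R}^n$ satisfying a finite system of rational interval constraints; $\mathbb{B}_n$ is the set of all rational boxes (including $\emptyset$). Equivalently, a non-empty rational box is a Cartesian product of $n$ non-empty, possibly unbounded, real intervals with rational, possibly open endpoints. Let $\mathbb{I}$ be the set of such intervals together with $\emptyset$, and for $I_1,I_2\in\mathbb{I}$ let $I_1\oplus I_2$ be the smallest element of $\mathbb{I}$ (w.r.t. inclusion) containing $I_1\cup I_2$. For $S\subseteq\mathbb{R}^n$, $\pi_i(S)=\{v_i : \mathbf{v}\in S\}$. $B_1\uplus B_2$ is the smallest rational box containing $B_1\cup B_2$; for non-empty boxes it equals $(\pi_1(B_1)\oplus\pi_1(B_2))\times\cdots\times(\pi_n(B_1)\oplus\pi_n(B_2))$. *)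

(* Defs.v *)
From Stdlib Require Import ClassicalEpsilon.
From mathcomp Require Import all_boot all_order all_algebra.
From mathcomp Require Import boolp classical_sets reals.
Set Implicit Arguments. Unset Strict Implicit. Unset Printing Implicit Defensive.
Import Order.TTheory GRing.Theory Num.Theory.
Local Open Scope ring_scope.
Local Open Scope classical_set_scope.

Inductive cmp := CLt | CLe | CEq | CGe | CGt.

Definition cmp_sat (R : realType) (c : cmp) (x b : R) : bool :=
  match c with
  | CLt => x < b | CLe => x <= b | CEq => x == b
  | CGe => x >= b | CGt => x > b
  end.

Record constr (n : nat) := Constr { c_dim : 'I_n; c_rel : cmp; c_bd : rat }.

(* points of R^n are row vectors; coordinate i of x is x ord0 i *)
Definition box_of (R : realType) (n : nat) (cs : seq (constr n)) : set 'rV[R]_n :=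
  [set x | all (fun c => cmp_sat (c_rel c) (x ord0 (c_dim c)) (ratr (c_bd c))) cs].

Definition is_rbox (R : realType) (n : nat) (B : set 'rV[R]_n) : Prop :=
  exists cs : seq (constr n), B = box_of cs.

(* I ∈ 𝕀 : the empty set or a non-empty, possibly unbounded interval with
   rational, possibly open endpoints = a set of reals given by finitely many
   constraints x ⋈ b, b rational *)
Definition is_rint (R : realType) (I : set R) : Prop :=
  exists cs : seq (cmp * rat),
    I = [set x | all (fun c => cmp_sat c.1 x (ratr c.2)) cs].

Definition is_smallest (T : Type) (P : set T -> Prop) (S A : set T) : Prop :=
  [/\ P A, S `<=` A & forall A', P A' -> S `<=` A' -> A `<=` A'].

Definition iplus (R : realType) (I1 I2 : set R) : set R :=
  epsilon (inhabits set0) (is_smallest (@is_rint R) (I1 `|` I2)).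

Definition bplus (R : realType) (n : nat) (B1 B2 : set 'rV[R]_n) : set 'rV[R]_n :=
  epsilon (inhabits set0) (is_smallest (@is_rbox R n) (B1 `|` B2)).

Definition proj (R : realType) (n : nat) (i : 'I_n) (S : set 'rV[R]_n) : set R :=
  (fun x : 'rV[R]_n => x ord0 i) @` S.

(* Main.v *)
Require Import Defs.
From mathcomp Require Import all_boot all_order all_algebra.
From mathcomp Require Import boolp classical_sets reals lra.
From Stdlib Require Import ClassicalEpsilon. From Stdlib Require List.
Set Implicit Arguments. Unset Strict Implicit. Unset Printing Implicit Defensive.
Import Order.TTheory GRing.Theory Num.Theory.
Local Open Scope ring_scope.
Local Open Scope classical_set_scope.

Section RInt.
Variable R : realType.

Definition hsat (c : cmp * rat) (x : R) : bool := cmp_sat c.1 x (ratr c.2).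
Definition isat (cs : seq (prod cmp rat)) (x : R) : bool := all (fun c => hsat c x) cs.

Definition hsplit (c : cmp * rat) : seq (prod cmp rat) :=
  match c.1 with CEq => [:: (CLe, c.2); (CGe, c.2)] | _ => [:: c] end.
Definition ssplit cs := flatten (map hsplit cs).
Definition half (c : cmp * rat) : bool := match c.1 with CEq => false | _ => true end.
Definition up (c : cmp * rat) : bool := match c.1 with CGe | CGt => true | _ => false end.
Definition side (b : bool) (x y : R) : bool := if b then x < y else y < x.

Lemma allIn (T : Type) (P : pred T) (s : seq T) :
  all P s <-> forall c, List.In c s -> P c.
Proof.
elim: s => [|c s IH] /=; first by split.
split.
  by move=> /andP[hc /IH hs] d [<-|/hs].
move=> h; apply/andP; split; first by apply: h; left.
by apply/IH => d hd; apply: h; right.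
Qed.

Lemma allInN (T : Type) (P : pred T) (s : seq T) :
  ~~ all P s -> exists c, List.In c s /\ ~~ P c.
Proof.
move=> h; apply: contrapT => hn; move/negP: h; apply; apply/allIn => c hc.
apply: contrapT => /negP hp; apply: hn; by exists c.
Qed.

Lemma isat_split cs x : isat (ssplit cs) x = isat cs x.
Proof.
elim: cs => [|[c b] cs IH] //.
have -> : ssplit ((c, b) :: cs) = hsplit (c, b) ++ ssplit cs by [].
rewrite /isat all_cat -!/(isat _ x) IH /=; congr andb.
case: c => //=; rewrite /hsat /= andbT // eq_le //.
Qed.

Lemma In_ssplit_cat cs1 cs2 d : List.In d (ssplit cs1) -> List.In d (ssplit (cs1 ++ cs2)).
Proof. by rewrite /ssplit map_cat flatten_cat => h; apply: List.in_or_app; left. Qed.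

Lemma In_ssplit_cat2 cs1 cs2 d : List.In d (ssplit cs2) -> List.In d (ssplit (cs1 ++ cs2)).
Proof. by rewrite /ssplit map_cat flatten_cat => h; apply: List.in_or_app; right. Qed.

Lemma In_ssplit_half cs d : List.In d (ssplit cs) -> half d.
Proof.
elim: cs => [|[c b] cs IH] //.
have -> : ssplit ((c, b) :: cs) = hsplit (c, b) ++ ssplit cs by [].
move=> h; case: (List.in_app_or _ _ _ h) => [|/IH//].
by clear h; case: c => /= [[<-|[]]|[<-|[]]|[<-|[<-|[]]]|[<-|[]]|[<-|[]]].
Qed.

Lemma sep d x y : half d -> ~~ hsat d x -> hsat d y -> side (up d) x y.
Proof.
case: d => [[] b] //= _; rewrite /hsat /side /= -?leNgt -?ltNge => hx hy; lra.
Qed.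

Lemma isat_filter (P : pred (prod cmp rat)) cs x :
  isat (filter P cs) x <-> forall d, List.In d cs -> P d -> hsat d x.
Proof.
elim: cs => [|c cs IH] /=; first by split.
case: (boolP (P c)) => Pc /=.
  rewrite /isat /= -/(isat _ x); split.
    by move=> /andP[hc /IH hs] d [<-//|/hs].
  move=> h; apply/andP; split; first by apply: h => //; left.
  by apply/IH => d hd; apply: h; right.
rewrite IH; split.
  by move=> h d [<-|/h//]; rewrite (negbTE Pc).
by move=> h d hd; apply: h; right.
Qed.

Lemma rint_hull (I1 I2 : set R) : is_rint I1 -> is_rint I2 ->
  exists A, is_smallest (@is_rint R) (I1 `|` I2) A.
Proof.
move=> [cs1 ->] [cs2 ->].
set S := _ `|` _.
pose valid d := forall y, S y -> hsat d y.
pose C := filter (fun d => `[< valid d >]) (ssplit (cs1 ++ cs2)).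
have key : forall x, isat C x -> forall c, half c -> valid c -> hsat c x.
  move=> x hx c hc vc; apply: contrapT => /negP ncx.
  have hS : forall y, S y -> side (up c) x y by move=> y /vc; exact: sep.
  have hC : forall d, List.In d (ssplit (cs1 ++ cs2)) -> valid d -> hsat d x.
    by move=> d hd vd; move/isat_filter: hx; apply => //; apply/asboolP.
  have nI1 : ~~ isat cs1 x.
    apply/negP => h; have := hS x (or_introl h); rewrite /side; case: up; lra.
  have nI2 : ~~ isat cs2 x.
    apply/negP => h; have := hS x (or_intror h); rewrite /side; case: up; lra.
  rewrite -isat_split in nI1; rewrite -isat_split in nI2.
  have [d1 [i1 n1]] := allInN nI1; have [d2 [i2 n2]] := allInN nI2.
  have v1 : forall y, isat cs1 y -> hsat d1 y.
    by move=> y; rewrite -isat_split => /allIn; apply.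
  have v2 : forall y, isat cs2 y -> hsat d2 y.
    by move=> y; rewrite -isat_split => /allIn; apply.
  have [y2 [Sy2 ny2]] : exists y, S y /\ ~~ hsat d1 y.
    apply: contrapT => hn; move/negP: n1; apply; apply: hC; first exact: In_ssplit_cat.
    move=> y Sy; apply: contrapT => /negP h; apply: hn; by exists y.
  have [y1 [Sy1 ny1]] : exists y, S y /\ ~~ hsat d2 y.
    apply: contrapT => hn; move/negP: n2; apply; apply: hC; first exact: In_ssplit_cat2.
    move=> y Sy; apply: contrapT => /negP h; apply: hn; by exists y.
  have I2y2 : isat cs2 y2.
    case: Sy2 => // h; by rewrite (v1 _ h) in ny2.
  have I1y1 : isat cs1 y1.
    case: Sy1 => // h; by rewrite (v2 _ h) in ny1.
  have h1 := sep (In_ssplit_half i1) n1 (v1 _ I1y1).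
  have h1' := hS _ Sy1.
  have h2 := sep (In_ssplit_half i2) n2 (v2 _ I2y2).
  have h2' := hS _ Sy2.
  have h3 := sep (In_ssplit_half i1) ny2 (v1 _ I1y1).
  have h4 := sep (In_ssplit_half i2) ny1 (v2 _ I2y2).
  move: h1 h1' h2 h2' h3 h4; rewrite /side.
  case: (up c); case: (up d1); case: (up d2) => /= *; lra.
exists [set x | isat C x]; split.
- by exists C.
- move=> y Sy; apply/isat_filter => d _ /asboolP; exact.
- move=> A' [cs' ->] sub x hx /=.
  rewrite -/(isat cs' x) -isat_split; apply/allIn => d hd.
  apply: key hx _ (In_ssplit_half hd) _ => y /sub /=.
  by rewrite -/(isat cs' y) -isat_split => /allIn; apply.
Qed.


Lemma eps_smallest (T : Type) (P : set T -> Prop) (S : set T) :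
  (exists A, is_smallest P S A) ->
  (epsilon (inhabits set0) (is_smallest P S) = S <-> P S).
Proof.
move=> ex; have [PE SE mn] := epsilon_spec (inhabits set0) _ ex.
split => [e|PS]; first by move: PE; rewrite e.
apply/seteqP; split; last exact: SE.
exact: (mn S PS (@subset_refl _ S)).
Qed.

Lemma all_dims (T : Type) (I : eqType) (g : T -> I) (P : pred T) (s : seq T) :
  all P s <-> forall i, all (fun c => (g c == i) ==> P c) s.
Proof.
split.
  by move=> h i; apply: sub_all h => c hc; apply/implyP.
elim: s => [|c s IH] //= h; apply/andP; split.
  by have /andP[/implyP H _] := h (g c); apply: H.
by apply: IH => i; have /andP[_ ?] := h i.
Qed.

Definition Jd n (i : 'I_n) (cs : seq (constr n)) : seq (prod cmp rat) :=
  map (fun c => (c_rel c, c_bd c)) (filter (fun c => c_dim c == i) cs).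

Lemma JdE n (i : 'I_n) cs t :
  isat (Jd i cs) t = all (fun c => (c_dim c == i) ==> cmp_sat (c_rel c) t (ratr (c_bd c))) cs.
Proof.
elim: cs => [|c cs IH] //=; rewrite /Jd /=; case: (c_dim c == i) => /=.
  by rewrite /isat /= -/(isat _ t) -IH.
exact: IH.
Qed.

Lemma box_J n (cs : seq (constr n)) (x : 'rV[R]_n) :
  box_of cs x <-> forall i, isat (Jd i cs) (x ord0 i).
Proof.
rewrite /box_of /=; split.
  by move=> /(all_dims (@c_dim n)) h i; rewrite JdE; move: (h i); apply: sub_all => c /implyP H; apply/implyP => /eqP e; rewrite -e; apply: H; rewrite e.
move=> h; apply/(all_dims (@c_dim n)) => i; move: (h i); rewrite JdE; apply: sub_all => c /implyP H; apply/implyP => /eqP e; move: (H (introT eqP e)); by rewrite e.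
Qed.

Lemma proj_box n (cs : seq (constr n)) (p : 'rV[R]_n) (i : 'I_n) :
  box_of cs p -> proj i (box_of cs) = [set t | isat (Jd i cs) t].
Proof.
move=> hp; apply/seteqP; split => t.
  by case=> x /box_J hx <-; exact: hx.
move=> /= Jt; exists (\row_k (if k == i then t else p ord0 k)); last by rewrite mxE eqxx.
apply/box_J => k; rewrite mxE; case: eqP => [->//|_].
by move/box_J: hp; apply.
Qed.

Lemma box_projE n (cs : seq (constr n)) (p x : 'rV[R]_n) : box_of cs p ->
  (box_of cs x <-> forall k, proj k (box_of cs) (x ord0 k)).
Proof.
move=> hp; rewrite box_J; split => h k; move: (h k); by rewrite (proj_box k hp).
Qed.

Lemma proj_rint n (B : set 'rV[R]_n) (i : 'I_n) : is_rbox B -> is_rint (proj i B).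
Proof.
move=> [cs ->]; have [[p hp]|ne] := pselect (exists p : 'rV[R]_n, box_of cs p).
  have -> : proj i (box_of cs) = [set t | isat (Jd i cs) t] by exact: proj_box hp.
  by exists (Jd i cs).
exists [:: (CLt, 0%R); (CGt, 0%R)]; apply/seteqP; split => t /=.
  by case=> x hx _; exfalso; apply: ne; exists x.
by rewrite rmorph0 andbT => /andP[h1 h2]; exfalso; lra.
Qed.

Lemma all_flatten_map (T U : Type) (P : pred U) (F : T -> seq U) (s : seq T) :
  all P (flatten (map F s)) = all (fun k => all P (F k)) s.
Proof. by elim: s => //= a s IH; rewrite all_cat IH. Qed.

Lemma prod_rbox n (J : 'I_n -> set R) : (forall k, is_rint (J k)) ->
  is_rbox [set x : 'rV[R]_n | forall k, J k (x ord0 k)].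
Proof.
rewrite /is_rint => hJ; have [f hf] := @choice _ _ _ hJ.
exists (flatten (map (fun k => map (fun c => Constr k c.1 c.2) (f k)) (enum 'I_n))).
apply/seteqP; split => x; rewrite /box_of /= all_flatten_map.
  move=> h; apply/allP => k _; rewrite all_map; move: (h k); rewrite hf /=.
  by apply: sub_all => c.
move/allP => h k; rewrite hf /=; move: (h k (mem_enum _ k)); rewrite all_map.
by apply: sub_all => c.
Qed.

Lemma rbox_hull n (B1 B2 : set 'rV[R]_n) : is_rbox B1 -> is_rbox B2 ->
  exists A, is_smallest (@is_rbox R n) (B1 `|` B2) A.
Proof.
move=> r1 r2.
have [[p1 h1]|e1] := pselect (exists p, B1 p); last first.
  exists B2; split => //; first by move=> x [h|h] //; exfalso; apply: e1; exists x.
  by move=> A' _ sub x h; apply: sub; right.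
have [[p2 h2]|e2] := pselect (exists p, B2 p); last first.
  exists B1; split => //; first by move=> x [h|h] //; exfalso; apply: e2; exists x.
  by move=> A' _ sub x h; apply: sub; left.
have hH : forall k, exists H, is_smallest (@is_rint R) (proj k B1 `|` proj k B2) H.
  by move=> k; apply: rint_hull; apply: proj_rint.
have [H hH'] := @choice _ _ _ hH.
exists [set x | forall k, H k (x ord0 k)]; split.
- by apply: prod_rbox => k; have [] := hH' k.
- move=> x hx k; have [_ sub _] := hH' k; apply: sub.
  by case: hx => h; [left|right]; exists x.
- move=> A' rA sub x hx.
  have [cs' eA] := rA; subst A'.
  apply/(box_projE _ (sub p1 (or_introl h1))) => k.
  have [_ _ mn] := hH' k; apply: (mn _ (proj_rint k rA)) (hx k).
  by move=> t [[y hy <-]|[y hy <-]]; exists y => //; apply: sub; [left|right].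
Qed.

Lemma notsub (T : Type) (A B : set T) : ~ (A `<=` B) -> exists a, A a /\ ~ B a.
Proof.
move=> h; apply: contrapT => hn; apply: h => a Aa; apply: contrapT => nB.
by apply: hn; exists a.
Qed.

Lemma main_iff n (B1 B2 : set 'rV[R]_n) : is_rbox B1 -> is_rbox B2 ->
  (is_rbox (B1 `|` B2) <->
   (forall i, is_rint (proj i B1 `|` proj i B2)) /\
   ~ (exists i j : 'I_n,
      [/\ i <> j, ~ (proj i B1 `<=` proj i B2) & ~ (proj j B2 `<=` proj j B1)])).
Proof.
move=> r1 r2; split.
  move=> rU; split.
    by move=> i; rewrite /proj -image_setU; exact: proj_rint.
  move=> [i [j [nij /notsub [a [[p hp pa] na]] /notsub [b [[q hq qb] nb]]]]].
  have [csU eU] := rU.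
  pose x : 'rV[R]_n := \row_k (if k == i then a else if k == j then b else p ord0 k).
  have xi : x ord0 i = a by rewrite mxE eqxx.
  have xj : x ord0 j = b.
    by rewrite mxE eqxx; case: eqP => // e; exfalso; apply: nij.
  have hpU : box_of csU p by rewrite -eU; left.
  have : (B1 `|` B2) x.
    rewrite eU; apply/(box_projE _ hpU) => k; rewrite -eU /proj image_setU.
    rewrite /x mxE; case: eqP => [->|_]; first by apply: or_introl; exists p.
    case: eqP => [->|_]; first by apply: or_intror; exists q.
    by apply: or_introl; exists p.
  case=> h.
    by apply: nb; rewrite -xj; exists x.
  by apply: na; rewrite -xi; exists x.
move=> [hR hC].
have [[p1 h1]|e1] := pselect (exists p, B1 p); last first.
  have -> : B1 `|` B2 = B2; last exact: r2.
  apply/seteqP; split => x; last by right.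
  by case=> // h; exfalso; apply: e1; exists x.
have [[p2 h2]|e2] := pselect (exists p, B2 p); last first.
  have -> : B1 `|` B2 = B1; last exact: r1.
  apply/seteqP; split => x; last by left.
  by case=> // h; exfalso; apply: e2; exists x.
have -> : B1 `|` B2 = [set x | forall k, (proj k B1 `|` proj k B2) (x ord0 k)].
  have [cs1 e1'] := r1; have [cs2 e2'] := r2.
  apply/seteqP; split => x.
    by case=> h k; [left|right]; exists x.
  move=> /= hx.
  have [//|n1] := pselect (B1 x); first by left.
  have [//|n2] := pselect (B2 x); first by right.
  exfalso.
  have [i ni] : exists i, ~ proj i B1 (x ord0 i).
    apply: contrapT => hn; apply: n1; rewrite e1'.
    have hp : box_of cs1 p1 by rewrite -e1'.
    apply/(box_projE _ hp) => k; rewrite -e1'; apply: contrapT => hk.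
    by apply: hn; exists k.
  have [j nj] : exists j, ~ proj j B2 (x ord0 j).
    apply: contrapT => hn; apply: n2; rewrite e2'.
    have hp : box_of cs2 p2 by rewrite -e2'.
    apply/(box_projE _ hp) => k; rewrite -e2'; apply: contrapT => hk.
    by apply: hn; exists k.
  have qi : proj i B2 (x ord0 i) by case: (hx i).
  have pj : proj j B1 (x ord0 j) by case: (hx j).
  apply: hC; exists j, i; split.
  - by move=> e; subst j.
  - by move=> s; apply: nj; apply: s.
  - by move=> s; apply: ni; apply: s.
exact: (@prod_rbox n (fun k => proj k B1 `|` proj k B2) hR).
Qed.

End RInt.

Theorem theorem5 (R : realType) (n : nat) (B1 B2 : set 'rV[R]_n) :
  is_rbox B1 -> is_rbox B2 ->
  (bplus B1 B2 <> B1 `|` B2 <->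
   (exists i : 'I_n,
      iplus (proj i B1) (proj i B2) <> proj i B1 `|` proj i B2) \/
   (exists i j : 'I_n,
      [/\ i <> j, ~ (proj i B1 `<=` proj i B2) & ~ (proj j B2 `<=` proj j B1)])).
Proof.
move=> r1 r2.
have eb := eps_smallest (rbox_hull r1 r2).
have ei : forall i, iplus (proj i B1) (proj i B2) = proj i B1 `|` proj i B2
                    <-> is_rint (proj i B1 `|` proj i B2).
  move=> i; apply: eps_smallest; apply: rint_hull; exact: proj_rint.
have M := main_iff r1 r2.
rewrite /bplus; split.
  move=> hne; apply: contrapT => hn; apply: hne; apply/eb/M; split.
    move=> i; apply/ei; apply: contrapT => h; apply: hn; left; by exists i.
  by move=> h; apply: hn; right.
move=> h /eb /M [hR hC]; case: h => [[i hi]|h]; last exact: hC.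
by apply: hi; apply/ei.
Qed.
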